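(* Let $G$ be a compact abelian group and $H$ a closed subgroup of $G$. Then $\lambda(G)\le\lambda(G/H)$.
   Context: For a compact abelian group $G$ with normalized Haar measure $\mu$ and (multiplicative) dual group of characters $\widehat{G}$, let $\mathbb{Z}[\widehat{G}]$ denote the ring of integral linear combinations of characters, regarded as functions on $G$. For $f\in\mathbb{Z}[\widehat{G}]$, the logarithmic Mahler measure over $G$ is $\mathsf{m}_G(f)=\int_G\log|f|\,d\mu$ (with $\log 0=-\infty$). The Lehmer constant of $G$ is $\lambda(G)=\inf\{\mathsf{m}_G(f): f\in\mathbb{Z}[\widehat{G}],\ \mathsf{m}_G(f)>0\}$ (the infimum of the empty set being $+\infty$). *)

(* Defs.v *)
From HB Require Import structures.
From mathcomp Require Import all_boot all_order all_algebra.
From mathcomp Require Import all_classical all_reals all_analysis.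
From mathcomp Require Import complex.

Set Implicit Arguments.
Unset Strict Implicit.
Unset Printing Implicit Defensive.

Import Order.TTheory GRing.Theory Num.Theory.
Import numFieldNormedType.Exports.
Local Open Scope classical_set_scope.
Local Open Scope ring_scope.

Definition pointed_of (G : topologicalZmodType) : Type := G.
HB.instance Definition _ (G : topologicalZmodType) :=
  Choice.on (pointed_of G).
HB.instance Definition _ (G : topologicalZmodType) :=
  isPointed.Build (pointed_of G) (0 : G).
Notation borel G :=
  (g_sigma_algebraType (@open G : set (set (pointed_of G)))).

(* compact Hausdorff abelian group (abelian topological group = topologicalZmodType) *)
Definition compact_abelian_group (G : topologicalZmodType) : Prop :=
  compact [set: G] /\ hausdorff_space G.

Definition closed_subgroup (G : topologicalZmodType) (H : set G) : Prop :=
  closed H /\ H 0 /\ (forall x y, H x -> H y -> H (x - y)).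

Definition translate (G : zmodType) (x : G) (A : set G) : set G :=
  [set x + a | a in A].

Definition haar_measure (R : realType) (G : topologicalZmodType)
    (mu : {measure set (borel G) -> \bar R}) : Prop :=
  [/\ mu setT = 1%E,
      (forall (x : G) (A : set (borel G)), measurable A ->
          mu (translate x A : set (borel G)) = mu A) &
      (forall A : set (borel G), measurable A ->
          mu A = ereal_inf [set mu (U : set (borel G)) |
                             U in [set U : set G | open U /\ A `<=` U]])].

Definition cmod (R : rcfType) (z : R[i]) : R :=
  Num.sqrt ((@complex.Re R z) ^+ 2 + (@complex.Im R z) ^+ 2).

Definition ccontinuous (R : realType) (G : topologicalType) (f : G -> R[i]) :=
  continuous (fun x => @complex.Re R (f x)) /\ continuous (fun x => @complex.Im R (f x)).

Definition is_character (R : realType) (G : topologicalZmodType)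
    (chi : G -> R[i]) : Prop :=
  [/\ ccontinuous chi,
      (forall x, cmod (chi x) = 1) &
      (forall x y, chi (x + y) = chi x * chi y)].

(* Z[G^]: integral linear combinations of characters, as functions on G *)
Definition in_Zdual (R : realType) (G : topologicalZmodType)
    (f : G -> R[i]) : Prop :=
  exists s : seq (int * {chi : G -> R[i] | is_character chi}),
    forall x, f x = \sum_(p <- s) (p.1)%:~R * (sval p.2) x.

Definition mahler (R : realType) (G : topologicalZmodType)
    (mu : {measure set (borel G) -> \bar R}) (f : G -> R[i]) : \bar R :=
  (\int[mu]_(x in setT)
     (if f x == 0%R then -oo else (ln (cmod (f x)))%:E))%E.

(* Lehmer constant of G (inf of the empty set is +oo) *)
Definition lehmer (R : realType) (G : topologicalZmodType)
    (mu : {measure set (borel G) -> \bar R}) : \bar R :=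
  ereal_inf [set mahler mu f | f in [set f | in_Zdual f /\ (0 < mahler mu f)%E]].

(* Main.v *)
Require Import Defs.
From HB Require Import structures.
From mathcomp Require Import all_boot all_order all_algebra.
From mathcomp Require Import all_classical all_reals all_analysis.
From mathcomp Require Import complex.
From mathcomp Require Import measurable_realfun.

Import Order.TTheory GRing.Theory Num.Theory.
Import numFieldNormedType.Exports.
Local Open Scope classical_set_scope.
Local Open Scope ring_scope.

Module Helpers.
Set Implicit Arguments.
Unset Strict Implicit.
Unset Printing Implicit Defensive.

Section Borel.
Context (R : realType) (K : topologicalZmodType).

Lemma borel_open (U : set K) : open U -> measurable (U : set (borel K)).
Proof. by move=> oU; exact: sub_sigma_algebra. Qed.

Lemma cont_meas (f : K -> R) : continuous f ->
  measurable_fun setT (f : borel K -> R).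
Proof.
move=> /continuousP cf; apply: (measurability _ (measurable_realfun.RGenOpens.measurableE R)).
move=> _ [_ [a [b ->]] <-]; rewrite setTI; apply: borel_open.
exact/cf/interval_open.
Qed.

Lemma trans_cont (a : K) : continuous (fun x : K => x + a).
Proof.
move=> x; apply: (@continuous_comp _ _ _ (fun x => (x, a)) (fun z : K * K => z.1 + z.2)).
  by apply: cvg_pair; [exact: cvg_id|exact: cvg_cst].
exact: add_continuous.
Qed.

Lemma cont_meas_K (f : K -> K) : continuous f ->
  measurable_fun setT (f : borel K -> borel K).
Proof.
move=> /continuousP cf; apply: (@measurability _ _ (borel K) (borel K) setT f (@open K : set (set (borel K)))) => //.
move=> _ [U oU <-]; rewrite setTI; apply: borel_open; exact: cf.
Qed.

End Borel.


Section Trans.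
Context (R : realType) (K : topologicalZmodType).
Variable mu : {measure set (borel K) -> \bar R}.
Hypothesis hmu : haar_measure mu.

Lemma haar_trans_int (P : K -> \bar R) (a : K) :
  measurable_fun setT (P : borel K -> _) -> (forall x, (0 <= P x)%E) ->
  (\int[mu]_x P ((x : K) + a)%R = \int[mu]_x P x)%E.
Proof.
move=> mP P0.
have mt := cont_meas_K (@trans_cont K a).
transitivity (\int[pushforward mu ((fun x : K => (x + a)%R) : borel K -> borel K)]_x P x)%E.
  rewrite (ge0_integral_pushforward mt) //=.
apply: eq_measure_integral => A mA _.
rewrite /pushforward; case: hmu => _ hT _; rewrite -(hT (- a) A mA).
congr (mu _); rewrite /translate; apply/seteqP; split => x /=.
  move=> Ax; exists (x + a)%R => //.
  by apply: (etrans _ (addKr a (x:K))); congr (_ + _); exact: addrC.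
move=> [b Ab <-].
have -> : ((- a + b) + a = b :> K)%R by rewrite addrC addrA subrr add0r.
exact: Ab.
Qed.
End Trans.

Section Fub.
Context d1 d2 (T1 : measurableType d1) (T2 : measurableType d2) (R : realType).

Lemma fin_sigma (mu : {measure set T1 -> \bar R}) : mu setT = 1%E ->
  sigma_finite setT mu.
Proof.
move=> h; apply: fin_num_fun_sigma_finite; first by rewrite measure0.
move=> U mU; rewrite ge0_fin_numE ?measure_ge0 //.
apply: (le_lt_trans (le_measure _ _ _ (subsetT U))) => //; rewrite ?inE //.
have h' : (mu [set: T1] <= 1)%E by rewrite le_eqVlt; apply/orP; left; apply/eqP; exact: h.
exact: (le_lt_trans h' (ltry _)).
Qed.

End Fub.

Section Fub2.
Context d1 d2 (T1 : measurableType d1) (T2 : measurableType d2) (R : realType).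
Lemma fub (mu1 : {measure set T1 -> \bar R}) (mu2 : {measure set T2 -> \bar R})
  (h1 : mu1 setT = 1%E) (h2 : mu2 setT = 1%E)
  (f : T1 * T2 -> \bar R) : measurable_fun setT f ->
  (forall z, 0 <= f z)%E ->
  (\int[mu1]_x \int[mu2]_y f (x, y) = \int[mu2]_y \int[mu1]_x f (x, y))%E.
Proof.
move=> mf f0.
pose H1 := isSFinite.Build _ _ _ (mu1 : set T1 -> \bar R) (sfinite_measure_sigma_finite (fin_sigma h1)).
pose m1 := HB.pack_for (SFiniteMeasure.type T1 R) (Measure.sort mu1) H1.
pose H2 := isSFinite.Build _ _ _ (mu2 : set T2 -> \bar R) (sfinite_measure_sigma_finite (fin_sigma h2)).
pose m2 := HB.pack_for (SFiniteMeasure.type T2 R) (Measure.sort mu2) H2.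
exact: (@sfinite_Fubini _ _ _ _ _ m1 m2 f f0 mf).
Qed.
End Fub2.


Section CMeas.
Context dd (T : measurableType dd) (R : realType).

Definition cmeas (u : T -> R[i]) :=
  measurable_fun setT (fun t => complex.Re (u t)) /\
  measurable_fun setT (fun t => complex.Im (u t)).

Lemma cmeas_cst (c : R[i]) : cmeas (fun _ => c).
Proof. by split; exact: measurable_cst. Qed.

Lemma cmeas_add u v : cmeas u -> cmeas v -> cmeas (fun t => u t + v t).
Proof.
move=> [ur ui] [vr vi]; split.
  have -> : (fun t => complex.Re (u t + v t)) =
     (fun t => complex.Re (u t)) \+ (fun t => complex.Re (v t)).
    by apply/funext => t /=; case: (u t) => a b; case: (v t).
  exact: measurable_funD.
have -> : (fun t => complex.Im (u t + v t)) =
   (fun t => complex.Im (u t)) \+ (fun t => complex.Im (v t)).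
  by apply/funext => t /=; case: (u t) => a b; case: (v t).
exact: measurable_funD.
Qed.

Lemma cmeas_mul u v : cmeas u -> cmeas v -> cmeas (fun t => u t * v t).
Proof.
move=> [ur ui] [vr vi]; split.
  have -> : (fun t => complex.Re (u t * v t)) =
     ((fun t => complex.Re (u t)) \* (fun t => complex.Re (v t))) \-
     ((fun t => complex.Im (u t)) \* (fun t => complex.Im (v t))).
    by apply/funext => t /=; case: (u t) => a b; case: (v t).
  by apply: measurable_funB; exact: measurable_funM.
have -> : (fun t => complex.Im (u t * v t)) =
   ((fun t => complex.Re (u t)) \* (fun t => complex.Im (v t))) \+
   ((fun t => complex.Im (u t)) \* (fun t => complex.Re (v t))).
  by apply/funext => t /=; case: (u t) => a b; case: (v t).
by apply: measurable_funD; exact: measurable_funM.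
Qed.

Lemma cmeas_sum (I : Type) (s : seq I) (h : I -> T -> R[i]) :
  (forall i, cmeas (h i)) -> cmeas (fun t => \sum_(i <- s) h i t).
Proof.
move=> hh; elim: s => [|i s IH].
  have -> : (fun t => \sum_(i <- [::]) h i t) = (fun _ => 0) .
    by apply/funext => t; rewrite big_nil.
  exact: cmeas_cst.
have -> : (fun t => \sum_(j <- i :: s) h j t) =
   (fun t => h i t + \sum_(j <- s) h j t).
  by apply/funext => t; rewrite big_cons.
exact: cmeas_add.
Qed.

Definition Phi (z : R[i]) : \bar R :=
  if z == 0 then -oo%E else (ln (cmod z))%:E.

Lemma meas_Phi u : cmeas u -> measurable_fun setT (fun t => Phi (u t)).
Proof.
move=> [ur ui].
have -> : (fun t => Phi (u t)) = (fun t =>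
   if (complex.Re (u t) == 0) && (complex.Im (u t) == 0) then -oo%E
   else (EFin \o (@ln R \o (@Num.sqrt R \o
      ((fun t => complex.Re (u t) ^+ 2) \+ (fun t => complex.Im (u t) ^+ 2))))) t).
  by apply/funext => t /=; rewrite /Phi /cmod eq_complex; case: (u t) => a b.
apply: measurable_fun_ifT.
- apply: measurable_and; apply: measurable_fun_eqr => //; exact: measurable_cst.
- exact: measurable_cst.
apply/measurable_EFinP; apply: measurableT_comp; first exact: measurable_ln.
apply: measurableT_comp; first exact: continuous_measurable_fun (@sqrt_continuous R).
by apply: measurable_funD; exact: measurable_funX.
Qed.

End CMeas.


Section Key.
Context (R : realType) (G Q : topologicalZmodType).
Variable muG : {measure set (borel G) -> \bar R}.
Variable muQ : {measure set (borel Q) -> \bar R}.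
Hypothesis hG : haar_measure muG.
Hypothesis hQ : haar_measure muQ.
Variable pi : G -> Q.
Hypothesis piD : forall x y, pi (x + y) = pi x + pi y.
Hypothesis surj : forall q : Q, exists x : G, pi x = q.

Lemma key (P : Q -> \bar R) :
  (forall y, 0 <= P y)%E ->
  measurable_fun setT (P : borel Q -> _) ->
  measurable_fun setT ((fun x => P (pi x)) : borel G -> _) ->
  measurable_fun setT ((fun z => P (pi z.1 + z.2)) : borel G * borel Q -> _) ->
  (\int[muG]_x P (pi x) = \int[muQ]_y P y)%E.
Proof.
move=> P0 mP mPpi mPGQ.
have G1 : muG setT = 1%E by case: hG.
have Q1 : muQ setT = 1%E by case: hQ.
have := fub G1 Q1 mPGQ (fun z => P0 _) => /= E.
transitivity (\int[muQ]_y \int[muG]_x P (pi x + y)%R)%E; last first.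
  rewrite -E.
  transitivity (\int[muG]_x (\int[muQ]_y P y))%E.
    apply: eq_integral => x _.
    rewrite -(haar_trans_int hQ (pi x) mP P0).
    by apply: eq_integral => y _; rewrite addrC.
  rewrite integral_cst //.
  have -> : muG setT = 1%E by [].
  by rewrite mule1.
transitivity (\int[muQ]_y (\int[muG]_x P (pi x)))%E; last first.
  apply: eq_integral => y _.
  have [a <-] := surj y.
  rewrite -(haar_trans_int hG a mPpi (fun _ => P0 _)).
  by apply: eq_integral => x _; rewrite piD.
rewrite integral_cst //.
have -> : muQ setT = 1%E by [].
by rewrite mule1.
Qed.

End Key.


Lemma char_cmeas (R : realType) (K : topologicalZmodType) (chi : K -> R[i]) :
  is_character chi -> cmeas (chi : borel K -> R[i]).
Proof. by move=> [[cr ci] _ _]; split; exact: cont_meas. Qed.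

Lemma cmeas_fst d1 d2 (T1 : measurableType d1) (T2 : measurableType d2)
  (R : realType) (u : T1 -> R[i]) : cmeas u -> cmeas (fun z : T1 * T2 => u z.1).
Proof.
move=> [ur ui]; split.
  exact: (measurableT_comp ur measurable_fst).
exact: (measurableT_comp ui measurable_fst).
Qed.

Lemma cmeas_snd d1 d2 (T1 : measurableType d1) (T2 : measurableType d2)
  (R : realType) (u : T2 -> R[i]) : cmeas u -> cmeas (fun z : T1 * T2 => u z.2).
Proof.
move=> [ur ui]; split.
  exact: (measurableT_comp ur measurable_snd).
exact: (measurableT_comp ui measurable_snd).
Qed.

Lemma char_comp (R : realType) (G Q : topologicalZmodType) (pi : G -> Q)
  (chi : Q -> R[i]) :
  (forall x y, pi (x + y) = pi x + pi y) -> continuous pi ->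
  is_character chi -> is_character (chi \o pi).
Proof.
move=> piD cpi [[cr ci] c1 cM]; split.
- split => x.
    exact: (continuous_comp (cpi x) (cr (pi x))).
  exact: (continuous_comp (cpi x) (ci (pi x))).
- by move=> x; exact: c1.
- by move=> x y; rewrite /= piD cM.
Qed.

Unset Implicit Arguments.
Set Strict Implicit.
Set Printing Implicit Defensive.
End Helpers.
Import Helpers.

(* The quotient G/H is represented by any compact (Hausdorff) abelian group Q
   together with a continuous surjective homomorphism pi : G -> Q whose
   kernel is H (such Q is isomorphic to G/H as a topological group). *)
Theorem lemma2p2 (R : realType) (G Q : topologicalZmodType)
    (muG : {measure set (borel G) -> \bar R})
    (muQ : {measure set (borel Q) -> \bar R})
    (H : set G) (pi : G -> Q) :
  compact_abelian_group G -> compact_abelian_group Q ->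
  haar_measure muG -> haar_measure muQ ->
  closed_subgroup H ->
  (forall x y, pi (x + y) = pi x + pi y) ->
  continuous pi ->
  (forall q : Q, exists x : G, pi x = q) ->
  (forall x : G, pi x = 0 <-> H x) ->
  (lehmer muG <= lehmer muQ)%E.
Proof.
move=> _ _ hG hQ _ piD cpi surj _.
apply: le_ereal_inf_tmp => _ [f [[s hs] hpos] <-].
apply: ge_ereal_inf.
pose h (p : int * {chi : Q -> R[i] | is_character chi}) (y : Q) :=
  (p.1)%:~R * sval p.2 y.
have cf : cmeas (f : borel Q -> R[i]).
  have -> : (f : borel Q -> R[i]) = fun y => \sum_(p <- s) h p y.
    by apply/funext => y; rewrite hs.
  apply: cmeas_sum => p; apply: cmeas_mul; first exact: cmeas_cst.
  exact: char_cmeas (svalP p.2).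
have cfpi : cmeas ((fun x => f (pi x)) : borel G -> R[i]).
  have -> : ((fun x => f (pi x)) : borel G -> R[i]) =
      fun x => \sum_(p <- s) h p (pi x).
    by apply/funext => x; rewrite hs.
  apply: cmeas_sum => p; apply: cmeas_mul; first exact: cmeas_cst.
  exact: char_cmeas (char_comp piD cpi (svalP p.2)).
have cfGQ : cmeas ((fun z => f (pi z.1 + z.2)) : borel G * borel Q -> R[i]).
  have -> : ((fun z => f (pi z.1 + z.2)) : borel G * borel Q -> R[i]) =
      fun z => \sum_(p <- s) ((p.1)%:~R * (sval p.2 (pi z.1) * sval p.2 z.2)).
    apply/funext => z; rewrite hs; apply: eq_bigr => p _.
    by case: (svalP p.2) => _ _ ->.
  apply: cmeas_sum => p; apply: cmeas_mul; first exact: cmeas_cst.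
  apply: cmeas_mul.
    exact: (cmeas_fst _ (char_cmeas (char_comp piD cpi (svalP p.2)))).
  exact: (cmeas_snd _ (char_cmeas (svalP p.2))).
pose F := fun y => Phi (f y).
have mF := meas_Phi cf.
have mFpi := meas_Phi cfpi.
have mFGQ := meas_Phi cfGQ.
have eqm : mahler muG (f \o pi) = mahler muQ f.
  rewrite /mahler.
  change (\int[muG]_x (F \o pi) x = \int[muQ]_y F y)%E.
  rewrite integralE [RHS]integralE (funepos_comp F pi) (funeneg_comp F pi).
  congr (_ - _)%E.
  - apply: (key hG hQ piD surj); first exact: funepos_ge0.
    + exact: measurable_funepos.
    + have := measurable_funepos mFpi; rewrite -/(F \o pi) funepos_comp; exact.
    + have := measurable_funepos mFGQ.
      by rewrite -/(F \o (fun z => pi z.1 + z.2)) funepos_comp.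
  - apply: (key hG hQ piD surj); first exact: funeneg_ge0.
    + exact: measurable_funeneg.
    + have := measurable_funeneg mFpi; rewrite -/(F \o pi) funeneg_comp; exact.
    + have := measurable_funeneg mFGQ.
      by rewrite -/(F \o (fun z => pi z.1 + z.2)) funeneg_comp.
exists (mahler muG (f \o pi)); last by rewrite eqm.
exists (f \o pi) => //; split; last by rewrite eqm.
exists (map (fun p => (p.1, exist _ (sval p.2 \o pi) (char_comp piD cpi (svalP p.2)))) s).
by move=> x; rewrite big_map /= hs.
Qed.
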